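(* For every input permutation, at every step of algorithm $\mathcal{D}^2\mathcal{I}$ we have $Top(D_1)<Top(I)$ (a statement about an empty stack being considered true).
   Context: The $\mathfrak{D}^2\mathfrak{I}$ machine consists of two decreasing stacks $D_1,D_2$ followed in series by an increasing stack $I$. Elements of $D_1,D_2$ must be in decreasing order from top to bottom (top largest); elements of $I$ in increasing order from top to bottom (top smallest). Operations: $d_0$ pushes the next input element (called $Input$) into $D_1$; $d_1$ moves $Top(D_1)$ to $D_2$; $d_2$ moves $Top(D_2)$ to $I$; $d_3$ pops $Top(I)$ and appends it to the output. Any comparison involving an empty stack is considered true. Conditions: ($\alpha$) $Top(D_2)<Top(I)$; ($\beta$) $Top(D_2)<Top(D_1)$ and $Top(D_1)<Top(I)$; ($\gamma$) $Top(D_1)<Input$, $Input<Top(I)$, and the sequence of input elements from $Input$ up to the first input element larger than $Top(D_2)$ is increasing. Algorithm $\mathcal{D}^2\mathcal{I}$ repeatedly executes the first applicable instruction among: 1. if $Top(I)$ is the next element to be output, perform $d_3$; 2. if the elements contained in $D_1\cup D_2$ are exactly the next elements to be output, move them to the output in increasing order; 3. perform $d_1$ if it is legal and ($\beta$) holds; 4. perform $d_0$ if it is legal and ($\gamma$) holds; 5. perform $d_2$ if it is legal and ($\alpha$) holds; 6. otherwise perform $d_3$. *)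

(* Defs.v *)
From mathcomp Require Import all_boot.
Set Implicit Arguments. Unset Strict Implicit. Unset Printing Implicit Defensive.

(* Stacks are sequences of naturals; the head of the sequence is the top. *)
(* Comparison of optional values: any comparison involving an empty stack
   (or exhausted input) is considered true. *)
Definition olt (a b : option nat) : bool :=
  match a, b with Some x, Some y => x < y | _, _ => true end.

Definition top (s : seq nat) : option nat := ohead s.

Record state := State {
  inp : seq nat;    (* remaining input; head = Input *)
  D1 : seq nat;     (* decreasing stack: top largest *)
  D2 : seq nat;     (* decreasing stack: top largest *)
  I  : seq nat;     (* increasing stack: top smallest *)
  out : seq nat
}.

(* The input is a permutation of 1..n, to be sorted; the next element to be
   output is therefore (size out).+1. *)
Definition next_out (st : state) : nat := (size (out st)).+1.

Definition op_d0 (st : state) : option state :=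
  match inp st with
  | x :: r => if olt (top (D1 st)) (Some x)
              then Some (State r (x :: D1 st) (D2 st) (I st) (out st)) else None
  | [::] => None
  end.

Definition op_d1 (st : state) : option state :=
  match D1 st with
  | x :: r => if olt (top (D2 st)) (Some x)
              then Some (State (inp st) r (x :: D2 st) (I st) (out st)) else None
  | [::] => None
  end.

Definition op_d2 (st : state) : option state :=
  match D2 st with
  | x :: r => if olt (Some x) (top (I st))
              then Some (State (inp st) (D1 st) r (x :: I st) (out st)) else None
  | [::] => None
  end.

Definition op_d3 (st : state) : option state :=
  match I st with
  | x :: r => Some (State (inp st) (D1 st) (D2 st) r (rcons (out st) x))
  | [::] => None
  end.

Definition cond_alpha (st : state) : bool := olt (top (D2 st)) (top (I st)).

Definition cond_beta (st : state) : bool :=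
  olt (top (D2 st)) (top (D1 st)) && olt (top (D1 st)) (top (I st)).

(* the sequence of input elements from Input up to (and including) the first
   input element larger than Top(D2); if there is no such element, the whole
   remaining input *)
Definition gamma_segment (st : state) : seq nat :=
  take (find (fun y => olt (top (D2 st)) (Some y)) (inp st)).+1 (inp st).

Definition cond_gamma (st : state) : bool :=
  [&& olt (top (D1 st)) (top (inp st)),
      olt (top (inp st)) (top (I st)) &
      sorted ltn (gamma_segment st)].

Definition isSome {A} (o : option A) : bool := if o is Some _ then true else false.

(* One step of algorithm D^2I: the first applicable instruction is executed.
   None means no instruction can be executed (the algorithm stops). *)
Definition step (st : state) : option state :=
  if top (I st) == Some (next_out st) then op_d3 st
  else if (D1 st ++ D2 st != [::]) &&
          perm_eq (D1 st ++ D2 st) (iota (next_out st) (size (D1 st ++ D2 st)))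
  then Some (State (inp st) [::] [::] (I st)
                   (out st ++ iota (next_out st) (size (D1 st ++ D2 st))))
  else if isSome (op_d1 st) && cond_beta st then op_d1 st
  else if isSome (op_d0 st) && cond_gamma st then op_d0 st
  else if isSome (op_d2 st) && cond_alpha st then op_d2 st
  else op_d3 st.

Definition init (s : seq nat) : state := State s [::] [::] [::] [::].

Fixpoint run (k : nat) (s : seq nat) : option state :=
  match k with
  | 0 => Some (init s)
  | k'.+1 => if run k' s is Some st then step st else None
  end.

(* Main.v *)
Require Import Defs.
From mathcomp Require Import all_boot.

Definition Inv (st : state) : bool :=
  [&& uniq (inp st ++ D1 st ++ D2 st), sorted (fun a b => b < a) (D1 st),
      sorted ltn (I st) & all (fun x => all (fun y => x < y) (I st)) (D1 st)].

Lemma gt_trans : transitive (fun a b : nat => b < a).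
Proof. move=> a b c h1 h2; exact: ltn_trans h2 h1. Qed.

Lemma inv_d3 st st' : Inv st -> op_d3 st = Some st' -> Inv st'.
Proof.
case: st => ip d1 d2 i o; rewrite /Inv /op_d3 /=.
case: i => [|x r] //= /and4P[u s1 si ha] [<-] /=.
rewrite u s1 (path_sorted si) /=.
apply/allP => z /(allP ha) /andP[_ ->] //.
Qed.

Lemma inv_d1 st st' : Inv st -> op_d1 st = Some st' -> Inv st'.
Proof.
case: st => ip d1 d2 i o; rewrite /Inv /op_d1 /=.
case: d1 => [|x r] //= /and4P[u s1 si ha]; case: ifP => // _ [<-] /=.
rewrite si (path_sorted s1) /=.
have -> : uniq (ip ++ r ++ x :: d2).
  rewrite -(perm_uniq (_ : perm_eq (ip ++ (x :: r) ++ d2) _)) //.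
  by rewrite perm_cat2l -cat1s -(cat1s x d2) catA perm_cat2r perm_catC.
by move/andP: ha => [_ ->].
Qed.

Lemma inv_d0 st st' : Inv st -> cond_gamma st -> op_d0 st = Some st' -> Inv st'.
Proof.
case: st => ip d1 d2 i o; rewrite /Inv /op_d0 /cond_gamma /=.
case: ip => [|x r] //= /and4P[u s1 si ha] /and3P[_ hxi _]; case: ifP => // hx [<-] /=.
have -> : uniq (r ++ (x :: d1) ++ d2).
  have pe : perm_eq (r ++ [:: x] ++ d1 ++ d2) ([:: x] ++ r ++ d1 ++ d2) by rewrite perm_catCA.
  by rewrite -cat1s (perm_uniq pe).
rewrite si ha andbT /=.
apply/andP; split.
  by case: d1 s1 hx {u ha} => //= a t ->; rewrite andbT.
case: i si hxi {ha u} => //= b t sb xb.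
rewrite xb /=; apply/allP => z hz.
apply: ltn_trans xb _; exact: (allP (order_path_min ltn_trans sb)).
Qed.

Lemma inv_d2 st st' : Inv st -> ~~ (isSome (op_d1 st) && cond_beta st) ->
  op_d2 st = Some st' -> Inv st'.
Proof.
case: st => ip d1 d2 i o; rewrite /Inv /op_d2 /op_d1 /cond_beta /=.
case: d2 => [|y r] //= /and4P[u s1 si ha] hn; case: ifP => // hy [<-] /=.
rewrite s1 /=.
apply/and3P; split.
- have pe : perm_eq (ip ++ d1 ++ y :: r) (y :: ip ++ d1 ++ r).
    by rewrite -(cat1s y r) -(cat1s y (ip ++ d1 ++ r)) catA perm_catCA -catA.
  by move: u; rewrite (perm_uniq pe) /= => /andP[].
- by move: si hy; case: (i) => //= b t -> ->.
- case: d1 s1 ha hn u => //= a t s1 /andP[ai ht] hn u.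
  have ay : a < y.
    have hai : olt (Some a) (top i) by move: ai; case: (i) => //= b t' /andP[].
    move: hn; rewrite (_ : match top i with Some y0 => a < y0 | None => true end) // andbT.
    case: ltngtP => // ha'; rewrite ?ha' /= => _.
    by move: u; rewrite ha' cat_uniq /= mem_cat inE eqxx orbT /= !andbF.
  rewrite ay ai /=.
  apply/allP => z hz; rewrite /= (allP ht z hz) andbT.
  apply: ltn_trans ay; exact: (allP (order_path_min gt_trans s1)).
Qed.

Lemma inv_step st st' : Inv st -> step st = Some st' -> Inv st'.
Proof.
move=> hi; rewrite /step.
case: ifP => _; first exact: inv_d3.
case: ifP => _.
  move=> [<-]; move: hi; rewrite /Inv /= andbT => /and3P[u _ /andP[-> _]].
  by move: u; rewrite cats0 cat_uniq => /andP[->].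
case: ifP => hb; first exact: inv_d1.
case: ifP => [/andP[_ hg]|_]; first exact: inv_d0.
case: ifP => [/andP[_ _]|_]; first by apply: inv_d2 => //; rewrite hb.
exact: inv_d3.
Qed.

Theorem mainTheorem7 (n : nat) (s : seq nat) :
  perm_eq s (iota 1 n) ->
  forall (k : nat) (st : state), run k s = Some st ->
    olt (top (D1 st)) (top (I st)).
Proof.
move=> hp k.
have: forall st, run k s = Some st -> Inv st.
  elim: k => [|k IH] st /=.
    by move=> [<-]; rewrite /Inv /= cats0 (perm_uniq hp) iota_uniq.
  case e: (run k s) => [st0|] // hs.
  exact: inv_step (IH _ e) hs.
move=> H st /H /and4P[_ _ _].
case: (D1 st) => //= a t /andP[+ _].
by case: (I st) => //= b t' /andP[].
Qed.
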